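(* For all $n,d\in\mathbb{N}$ and every object $G$ of $\mathbf{gr}$, there is a natural isomorphism (indeed an equality of subgroups of $P^{\mathbf{gr}}_n(G)=\mathbb{Z}[G^n]$) $$K^d_n(G)\simeq\mathcal{I}^{d+1}(G^n).$$
   Context: $\mathbf{gr}$ is the category of free groups $\mathbb{Z}^{*n}$ ($n\in\mathbb{N}$) and homomorphisms; $\mathcal{F}(\mathbf{gr})$ is the category of functors $\mathbf{gr}\to\mathbf{Ab}$. Cross effects: $cr_n(F)(G_1,\dots,G_n)=\ker\big(F(G_1*\dots*G_n)\to\bigoplus_i F(G_1*\dots*\widehat{G_i}*\dots*G_n)\big)$; $F$ is polynomial of degree $\le d$ if $cr_{d+1}(F)=0$; $\mathcal{F}_d(\mathbf{gr})$ is the full subcategory of such functors. The inclusion $\mathcal{F}_d(\mathbf{gr})\to\mathcal{F}(\mathbf{gr})$ has a left adjoint $q_d$, $q_d(F)$ being the largest quotient of $F$ lying in $\mathcal{F}_d(\mathbf{gr})$. $P^{\mathbf{gr}}_n=\mathbb{Z}[\mathbf{gr}(\mathbb{Z}^{*n},-)]$, canonically identified with $G\mapsto\mathbb{Z}[G^n]$. $K^d_n:=\ker(P^{\mathbf{gr}}_n\twoheadrightarrow q_d(P^{\mathbf{gr}}_n))$. $\mathcal{I}^{r}(\Gamma)$ is the $r$-th power of the augmentation ideal of $\mathbb{Z}[\Gamma]$. *)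

(* Defs.v *)
From HB Require Import structures.
From mathcomp Require Import all_boot all_order all_algebra.
From mathcomp Require Import freeg.
Set Implicit Arguments. Unset Strict Implicit. Unset Printing Implicit Defensive.
Import Order.TTheory GRing.Theory Num.Theory.
Local Open Scope ring_scope.

(* The free group Z^{*m} on generators 'I_m, as reduced words.             *)
(* A letter (j, false) is the generator x_j, (j, true) is x_j^{-1}.        *)
Definition letter (m : nat) := ('I_m * bool)%type.

Definition cancels (m : nat) (x y : letter m) : bool :=
  (x.1 == y.1) && (x.2 != y.2).

Fixpoint wred (m : nat) (w : seq (letter m)) : bool :=
  match w with
  | x :: ((y :: _) as w') => ~~ cancels x y && wred w'
  | _ => true
  end.

Definition FG (m : nat) := {w : seq (letter m) | wred w}.

Definition fone (m : nat) : FG m := exist _ [::] isT.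

Definition push (m : nat) (x : letter m) (s : seq (letter m)) : seq (letter m) :=
  match s with
  | y :: s' => if cancels x y then s' else x :: s
  | [::] => [:: x]
  end.

Definition fmul (m : nat) (u v : FG m) : FG m :=
  insubd (fone m) (foldr (@push m) (val v) (val u)).

Definition finv (m : nat) (u : FG m) : FG m :=
  insubd (fone m) (rev (map (fun x : letter m => (x.1, ~~ x.2)) (val u))).

Definition gen (m : nat) (j : 'I_m) : FG m := insubd (fone m) [:: (j, false)].

(* The homomorphism Z^{*k} -> Z^{*m} sending x_j to f j.  Every morphism
   of gr(Z^{*k}, Z^{*m}) is of this form, for a unique f. *)
Definition ext (k m : nat) (f : 'I_k -> FG m) (w : FG k) : FG m :=
  foldr (fun x acc => fmul (if x.2 then finv (f x.1) else f x.1) acc)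
        (fone m) (val w).

(* The group G^n (for G = Z^{*m}) and the group ring Z[G^n] = P_n^gr(G).   *)
Definition Gn (n m : nat) := {ffun 'I_n -> FG m}.

Definition gmul (n m : nat) (a b : Gn n m) : Gn n m := [ffun i => fmul (a i) (b i)].
Definition gone (n m : nat) : Gn n m := [ffun _ => fone m].

Definition ZG (n m : nat) := {freeg (Gn n m) / int}.

Definition basis (n m : nat) (g : Gn n m) : ZG n m := [freeg [:: ((1 : int), g)]].

Definition zmul (n m : nat) (D1 D2 : ZG n m) : ZG n m :=
  fglift (fun g => fglift (fun h => basis (gmul g h)) D2) D1.
Definition zone (n m : nat) : ZG n m := basis (gone n m).

Definition Pmap (n k m : nat) (phi : FG k -> FG m) (D : ZG n k) : ZG n m :=
  fglift (fun g : Gn n k => basis [ffun i => phi (g i)]) D.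

Definition aug_ideal (n m : nat) (D : ZG n m) : Prop := deg D = 0.

(* additive subgroup generated by a predicate (finite sums of its elements;
   the predicates it is applied to below are closed under negation) *)
Definition addspan (n m : nat) (P : ZG n m -> Prop) (D : ZG n m) : Prop :=
  exists s : seq (ZG n m), (forall x, x \in s -> P x) /\ D = \sum_(x <- s) x.

Fixpoint idealpow (n m : nat) (r : nat) : ZG n m -> Prop :=
  match r with
  | 0 => fun _ => True
  | r'.+1 => @addspan n m (fun x => exists a b : ZG n m,
                 @idealpow n m r' a /\ @aug_ideal n m b /\ x = zmul a b)
  end.

(* Subfunctors of P_n^gr (on the skeleton {Z^{*m}}), polynomial quotients. *)
Definition subfunctor (n : nat) (S : forall m, ZG n m -> Prop) : Prop :=
  (forall m, S m 0) /\
  (forall m x y, S m x -> S m y -> S m (x - y)) /\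
  (forall k m (f : 'I_k -> FG m) (D : ZG n k), S k D -> S m (@Pmap n k m (ext f) D)).

(* the endomorphism of Z^{*N} killing the generators of colour i
   (composite of the retraction G_1*..*G_{d+1} -> G_1*..^G_i..*G_{d+1}
    with the canonical inclusion, where G_i is generated by colour-i generators) *)
Definition kill (N d : nat) (c : 'I_N -> 'I_d.+1) (i : 'I_d.+1) (j : 'I_N) : FG N :=
  if c j == i then fone N else gen j.

(* the quotient functor P_n^gr / S has cr_{d+1} = 0 *)
Definition quot_poly_le (d n : nat) (S : forall m, ZG n m -> Prop) : Prop :=
  forall N (c : 'I_N -> 'I_d.+1) (D : ZG n N),
    (forall i, S N (@Pmap n N N (ext (kill c i)) D)) -> S N D.

(* K^d_n = ker (P_n -> q_d P_n): the smallest subfunctor S of P_n with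
   P_n / S in F_d(gr), i.e. the intersection of all of them. *)
Definition Kdn (d n m : nat) (D : ZG n m) : Prop :=
  forall S, subfunctor S -> quot_poly_le d S -> S m D.

(* Main.v *)
Require Import Defs.
From HB Require Import structures.
From mathcomp Require Import all_boot all_order all_algebra.
From mathcomp Require Import freeg.
From mathcomp Require Import zify.
Set Implicit Arguments. Unset Strict Implicit. Unset Printing Implicit Defensive.
Import Order.TTheory GRing.Theory Num.Theory.
Local Notation finv := Defs.finv.

Section FreeGroup.
Variable m : nat.
Local Notation L := (letter m).
Implicit Types (x y z : L) (s t X : seq L).

Definition linv x : L := (x.1, ~~ x.2).
Definition nc x y := ~~ cancels x y.

Lemma wred_sorted s : wred s = sorted nc s.
Proof. elim: s => // x s IH; case: s IH => // y s IH.
by rewrite /= in IH *; rewrite IH. Qed.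

Lemma wred_tail x s : wred (x :: s) -> wred s.
Proof. by case: s => //= y s /andP[]. Qed.

Lemma cancelsE x y : cancels x y = (y == linv x).
Proof.
case: x y => [a b] [a' b']; rewrite /cancels /linv /= xpair_eqE.
by rewrite eq_sym; case: b b' => [] [].
Qed.

Lemma linvK x : linv (linv x) = x.
Proof. by case: x => a b; rewrite /linv /= negbK. Qed.

Lemma push_wred x s : wred s -> wred (push x s).
Proof.
case: s => [|y s] //= Hs; case: ifP => [_|Hc]; first exact: wred_tail Hs.
by rewrite /= Hc Hs.
Qed.

Definition act s X := foldr (@push m) X s.

Lemma act_cat s t X : act (s ++ t) X = act s (act t X).
Proof. exact: foldr_cat. Qed.

Lemma act_wred s X : wred X -> wred (act s X).
Proof. by elim: s => //= x s IH /IH; apply: push_wred. Qed.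

Lemma push_inv x X : wred X -> push (linv x) (push x X) = X.
Proof.
have cl : cancels (linv x) x by rewrite cancelsE linvK.
case: X => [|y X] /=; first by rewrite cl.
case: ifP => [|Hc]; last by rewrite /= cl.
rewrite cancelsE => /eqP ->; case: X => [|z X] //= /andP[Hyz _].
by rewrite cancelsE in Hyz *; rewrite (negbTE Hyz).
Qed.

Lemma push_cancel x y X : cancels x y -> wred X -> push x (push y X) = X.
Proof. by rewrite cancelsE => /eqP -> HX; rewrite -{1}[x]linvK push_inv. Qed.

Definition red s := act s [::].

Lemma red_wred s : wred s -> red s = s.
Proof.
elim: s => // x s IH Hs; rewrite /red /= -/(red s) IH; last exact: wred_tail Hs.
by case: s Hs {IH} => //= y s /andP[/negbTE -> _].
Qed.

Lemma act_push x r X : wred X -> act (push x r) X = push x (act r X).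
Proof.
move=> HX; case: r => [|y r] //=; case: ifP => // Hc.
by rewrite push_cancel // act_wred.
Qed.

Lemma act_red s X : wred X -> act (red s) X = act s X.
Proof.
move=> HX; elim: s => //= x s IH.
by rewrite -/(act s [::]) -/(red s) act_push // IH.
Qed.

Lemma red_cat s t : red (s ++ t) = act s (red t).
Proof. by rewrite /red act_cat. Qed.

Lemma act_inv_l s X : wred X -> act (rev (map linv s) ++ s) X = X.
Proof.
elim: s X => //= x s IH X HX.
rewrite rev_cons -cats1 -catA act_cat /= push_inv ?act_wred //.
by rewrite -act_cat IH.
Qed.

Lemma act_inv_r s X : wred X -> act (s ++ rev (map linv s)) X = X.
Proof.
elim: s X => //= x s IH X HX.
rewrite rev_cons -cats1 catA act_cat /= IH ?push_wred //.
by rewrite -{1}[x]linvK push_inv.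
Qed.

Lemma wred_inv s : wred s -> wred (rev (map linv s)).
Proof.
rewrite !wred_sorted rev_sorted sorted_map; apply: sub_sorted => x y.
by rewrite /nc /relpre /cancels /linv /= eq_sym; case: (x.2); case: (y.2).
Qed.
End FreeGroup.

Section FGLaws.
Variable m : nat.
Implicit Types u v w : FG m.

Lemma val_fmul u v : val (fmul u v) = act (val u) (val v).
Proof. by rewrite /fmul insubdK //; apply: act_wred; apply: valP. Qed.

Lemma val_fone : val (fone m) = [::].
Proof. by []. Qed.

Lemma val_finv u : val (finv u) = rev (map (@linv m) (val u)).
Proof. by rewrite /finv insubdK //; apply: wred_inv; apply: valP. Qed.

Lemma fmul1g u : fmul (fone m) u = u.
Proof. by apply: val_inj; rewrite val_fmul. Qed.

Lemma fmulg1 u : fmul u (fone m) = u.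
Proof. by apply: val_inj; rewrite val_fmul val_fone -/(red _) red_wred //; apply: valP. Qed.

Lemma fmulA u v w : fmul u (fmul v w) = fmul (fmul u v) w.
Proof.
apply: val_inj; rewrite !val_fmul.
have -> : act (val u) (val v) = red (val u ++ val v).
  by rewrite red_cat red_wred //; apply: valP.
by rewrite act_red ?act_cat //; apply: valP.
Qed.

Lemma fmulVg u : fmul (finv u) u = fone m.
Proof.
apply: val_inj; rewrite val_fmul val_finv -{2}(red_wred (valP u)) /red -act_cat.
by rewrite act_inv_l.
Qed.

Lemma fmulgV u : fmul u (finv u) = fone m.
Proof.
apply: val_inj; rewrite val_fmul val_finv.
rewrite -(red_wred (wred_inv (valP u))) /red -act_cat.
by rewrite act_inv_r.
Qed.

Lemma finv1 : finv (fone m) = fone m.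
Proof. by apply: val_inj; rewrite val_finv. Qed.
End FGLaws.

Definition sl (m : nat) (x : letter m) : FG m := insubd (fone m) [:: x].

Lemma val_sl m (x : letter m) : val (sl x) = [:: x].
Proof. by rewrite /sl insubdK. Qed.

Lemma gen_sl m (j : 'I_m) : gen j = sl (j, false).
Proof. by []. Qed.

Lemma finv_sl m (x : letter m) : finv (sl x) = sl (linv x).
Proof. by apply: val_inj; rewrite val_finv !val_sl. Qed.

Lemma red_act m (u v : FG m) : act (val u) (val v) = red (val u ++ val v).
Proof. by rewrite red_cat red_wred //; apply: valP. Qed.

Section Ext.
Variables k m : nat.
Variable f : 'I_k -> FG m.

Definition phi (x : letter k) := if x.2 then finv (f x.1) else f x.1.
Definition Eseq (s : seq (letter k)) :=
  foldr (fun x acc => fmul (phi x) acc) (fone m) s.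

Lemma extE w : ext f w = Eseq (val w).
Proof. by []. Qed.

Lemma Eseq_cat s t : Eseq (s ++ t) = fmul (Eseq s) (Eseq t).
Proof. by elim: s => [|x s IH] /=; rewrite ?fmul1g // IH fmulA. Qed.

Lemma phi_linv x : fmul (phi (linv x)) (phi x) = fone m.
Proof. by case: x => a [] /=; rewrite /phi /linv /= ?fmulgV ?fmulVg. Qed.

Lemma Eseq_push x s : Eseq (push x s) = Eseq (x :: s).
Proof.
case: s => [|y s] //=; case: ifP => // Hc.
move: Hc; rewrite cancelsE => /eqP ->.
by rewrite fmulA -{1}[x]linvK phi_linv fmul1g.
Qed.

Lemma Eseq_red s : Eseq (red s) = Eseq s.
Proof.
elim: s => // x s IH; rewrite /red /= -/(red s) Eseq_push /= IH //.
Qed.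

Lemma ext_mul u v : ext f (fmul u v) = fmul (ext f u) (ext f v).
Proof. by rewrite !extE val_fmul red_act Eseq_red Eseq_cat. Qed.

Lemma ext_one : ext f (fone k) = fone m.
Proof. by []. Qed.

Lemma ext_sl x : ext f (sl x) = phi x.
Proof. by rewrite extE val_sl /= fmulg1. Qed.

Lemma ext_gen j : ext f (gen j) = f j.
Proof. by rewrite gen_sl ext_sl. Qed.
End Ext.

Section Decomp.
Variable m : nat.

Lemma foldl_sl (s : seq (letter m)) :
  val (foldl (@fmul m) (fone m) (map (@sl m) s)) = red s.
Proof.
elim/last_ind: s => // s x IH.
rewrite map_rcons foldl_rcons val_fmul val_sl IH act_red // -cats1 red_cat.
by [].
Qed.

Lemma word_decomp (w : FG m) : foldl (@fmul m) (fone m) (map (@sl m) (val w)) = w.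
Proof. by apply: val_inj; rewrite foldl_sl red_wred //; apply: valP. Qed.

Lemma word_decomp' (w : FG m) : foldl (@fmul m) (fone m) (map (@sl m) (sval w)) = w.
Proof. exact: word_decomp. Qed.

Lemma foldl_fmul (a : FG m) l : foldl (@fmul m) a l = fmul a (foldl (@fmul m) (fone m) l).
Proof.
elim: l a => [|x l IH] a /=; first by rewrite fmulg1.
by rewrite IH [in RHS]IH fmul1g fmulA.
Qed.

Lemma foldl_fones (a : FG m) T (s : seq T) : foldl (@fmul m) a [seq fone m | _ <- s] = a.
Proof. by elim: s a => //= _ s IH a; rewrite fmulg1 IH. Qed.
End Decomp.

Section DecompN.
Variables n m : nat.

Definition es (c : 'I_n) (x : letter m) : Gn n m :=
  [ffun i => if i == c then sl x else fone m].

Definition Lg (g : Gn n m) : seq (Gn n m) :=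
  flatten [seq [seq es c x | x <- val (g c)] | c <- enum 'I_n].

Lemma foldl_gmul_coord (a : Gn n m) l i :
  (foldl (@gmul n m) a l) i = foldl (@fmul m) (a i) [seq (e : Gn n m) i | e <- l].
Proof. by elim: l a => //= e l IH a; rewrite IH /gmul ffunE. Qed.

Lemma foldl_flat (g : Gn n m) i (cs : seq 'I_n) (a : FG m) : uniq cs ->
  foldl (@fmul m) a (flatten [seq [seq (if i == c then sl x else fone m) | x <- val (g c)] | c <- cs])
  = if i \in cs then fmul a (g i) else a.
Proof.
elim: cs a => //= c cs IH a /andP[ncs ucs].
rewrite foldl_cat in_cons; case: (i =P c) => [eic|ne] /=.
  subst c.
  by rewrite [foldl _ a _]foldl_fmul word_decomp' IH // (negbTE ncs).
by rewrite foldl_fones IH.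
Qed.
Lemma Lg_decomp (g : Gn n m) : foldl (@gmul n m) (gone n m) (Lg g) = g.
Proof.
apply/ffunP => i; rewrite foldl_gmul_coord ffunE /Lg map_flatten.
have -> : [seq [seq (e : Gn n m) i | e <- s] | s <- [seq [seq es c x | x <- sval (g c)] | c <- enum 'I_n]]
   = [seq [seq (if i == c then sl x else fone m) | x <- sval (g c)] | c <- enum 'I_n].
  by rewrite -map_comp; apply: eq_map => c /=; rewrite -map_comp; apply: eq_map => x /=; rewrite ffunE.
by rewrite foldl_flat ?enum_uniq // mem_enum fmul1g.
Qed.
End DecompN.

Section ZGAlg.
Variables n m : nat.
Local Notation ZG := (ZG n m).
Local Notation Gn := (Gn n m).
Local Open Scope ring_scope.
Implicit Types (x y z : ZG) (g h : Gn).

Lemma fgliftB (M : lmodType int) (f : Gn -> M) (x y : ZG) :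
  fglift f (x - y) = fglift f x - fglift f y.
Proof. exact: lift_is_additive. Qed.

Lemma fglift0 (M : lmodType int) (f : Gn -> M) : fglift f 0 = 0.
Proof. by rewrite -(subrr (0 : ZG)) fgliftB subrr. Qed.

Lemma fglift_basis (M : lmodType int) (f : Gn -> M) g : fglift f (basis g) = f g.
Proof. by rewrite /basis liftU scale1r. Qed.

Lemma subrACA' (V : zmodType) (A B C E : V) : (A - B) - (C - E) = (A - C) - (B - E).
Proof. by rewrite !opprD !opprK addrACA. Qed.

Lemma ZG_ind (P : ZG -> Prop) : P 0 -> (forall x y, P x -> P y -> P (x - y)) ->
  (forall g, P (basis g)) -> forall D, P D.
Proof.
move=> P0 PB Pb D.
have PN x : P x -> P (- x) by move=> Px; rewrite -sub0r; apply: PB.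
have PD x y : P x -> P y -> P (x + y).
  by move=> Px Py; rewrite -[y]opprK; apply: PB => //; apply: PN.
have Pn x k : P x -> P (x *+ k).
  by move=> Px; elim: k => [|k IH]; rewrite ?mulr0n // mulrS; apply: PD.
have Pz x k : P x -> P (x *~ k).
  by move=> Px; case: k => k /=; [apply: Pn | apply: PN; apply: Pn].
rewrite -[D]freeg_sumE; elim: (dom D) => [|z s IH]; first by rewrite big_nil.
rewrite big_cons; apply: PD => //.
by rewrite -[X in << X *g _ >>]intz -freeg_mulz; apply: Pz; apply: Pb.
Qed.

Lemma zmulBl x y z : zmul (x - y) z = zmul x z - zmul y z.
Proof. exact: fgliftB. Qed.

Lemma zmul0l z : zmul 0 z = 0.
Proof. exact: fglift0. Qed.

Lemma zmul_basisl g z : zmul (basis g) z = fglift (fun h => basis (gmul g h)) z.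
Proof. by rewrite /zmul fglift_basis. Qed.

Lemma zmulBr x y z : zmul x (y - z) = zmul x y - zmul x z.
Proof.
elim/ZG_ind: x => [|a b Ha Hb|g]; first by rewrite !zmul0l subrr.
  by rewrite !zmulBl Ha Hb subrACA'.
by rewrite !zmul_basisl fgliftB.
Qed.

Lemma zmul0r x : zmul x 0 = 0.
Proof. have H := zmulBr x 0 0. rewrite subrr in H. rewrite subrr in H. exact H. Qed.

Lemma zmulNl x y : zmul (- x) y = - zmul x y.
Proof. by rewrite -[- x]sub0r zmulBl zmul0l sub0r. Qed.

Lemma zmulNr x y : zmul x (- y) = - zmul x y.
Proof. by rewrite -[- y]sub0r zmulBr zmul0r sub0r. Qed.

Lemma zmulDl x y z : zmul (x + y) z = zmul x z + zmul y z.
Proof. by rewrite -{1}[y]opprK zmulBl zmulNl opprK. Qed.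

Lemma zmulDr x y z : zmul x (y + z) = zmul x y + zmul x z.
Proof. by rewrite -{1}[z]opprK zmulBr zmulNr opprK. Qed.

Lemma zmul_basis g h : zmul (basis g) (basis h) = basis (gmul g h).
Proof. by rewrite zmul_basisl fglift_basis. Qed.

Lemma gmulg1 (g : Gn) : gmul g (gone n m) = g.
Proof. by apply/ffunP => i; rewrite !ffunE fmulg1. Qed.

Lemma zmulr1 x : zmul x (zone n m) = x.
Proof.
elim/ZG_ind: x => [|a b Ha Hb|g]; first by rewrite zmul0l.
  by rewrite zmulBl Ha Hb.
by rewrite zmul_basis gmulg1.
Qed.

Lemma zmul_suml T (s : seq T) (F : T -> ZG) z :
  zmul (\sum_(t <- s) F t) z = \sum_(t <- s) zmul (F t) z.
Proof.
elim: s => [|t s IH]; first by rewrite !big_nil zmul0l.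
by rewrite !big_cons zmulDl IH.
Qed.

Lemma zmul_sumr T (s : seq T) (F : T -> ZG) z :
  zmul z (\sum_(t <- s) F t) = \sum_(t <- s) zmul z (F t).
Proof.
elim: s => [|t s IH]; first by rewrite !big_nil zmul0r.
by rewrite !big_cons zmulDr IH.
Qed.

Lemma deg_basis g : deg (basis g) = 1.
Proof. exact: degU. Qed.

End ZGAlg.

Section PmapAlg.
Variables n k m : nat.
Local Open Scope ring_scope.
Variable ph : FG k -> FG m.
Implicit Types (x y : ZG n k).

Lemma PmapB x y : Pmap ph (x - y) = Pmap ph x - Pmap ph y :> ZG n m.
Proof. exact: fgliftB. Qed.

Lemma Pmap0 : Pmap ph 0 = 0 :> ZG n m.
Proof. exact: fglift0. Qed.

Lemma Pmap_basis (g : Gn n k) : Pmap ph (basis g) = basis [ffun i => ph (g i)].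
Proof. exact: fglift_basis. Qed.

Lemma PmapD x y : Pmap ph (x + y) = Pmap ph x + Pmap ph y :> ZG n m.
Proof. by rewrite -{1}[y]opprK PmapB -[- y]sub0r PmapB Pmap0 sub0r opprK. Qed.

Lemma Pmap_sum T (s : seq T) (F : T -> ZG n k) :
  Pmap ph (\sum_(t <- s) F t) = \sum_(t <- s) Pmap ph (F t).
Proof.
elim: s => [|t s IH]; first by rewrite !big_nil Pmap0.
by rewrite !big_cons PmapD IH.
Qed.

Lemma deg_Pmap (D : ZG n k) : deg (Pmap ph D) = deg D.
Proof.
elim/ZG_ind: D => [|a b Ha Hb|g]; first by rewrite Pmap0 !raddf0.
  by rewrite PmapB !degB Ha Hb.
by rewrite Pmap_basis !deg_basis.
Qed.

Hypothesis phM : forall a b, ph (fmul a b) = fmul (ph a) (ph b).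
Hypothesis ph1 : ph (fone k) = fone m.

Lemma Pmap_one : Pmap ph (zone n k) = zone n m.
Proof. by rewrite /zone Pmap_basis; congr basis; apply/ffunP => i; rewrite !ffunE ph1. Qed.

Lemma Pmap_zmul (x y : ZG n k) : Pmap ph (zmul x y) = zmul (Pmap ph x) (Pmap ph y).
Proof.
move: y; elim/ZG_ind: x => [|a b Ha Hb|g] y; first by rewrite !zmul0l Pmap0 zmul0l.
  by rewrite zmulBl !PmapB Ha Hb zmulBl.
elim/ZG_ind: y => [|a b Ha Hb|h]; first by rewrite !zmul0r Pmap0 zmul0r.
  by rewrite zmulBr !PmapB Ha Hb zmulBr.
rewrite zmul_basis !Pmap_basis zmul_basis; congr basis.
by apply/ffunP => i; rewrite !ffunE phM.
Qed.
End PmapAlg.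

Section Ideal.
Variables n m : nat.
Local Notation ZG := (ZG n m).
Local Notation Gn := (Gn n m).
Local Open Scope ring_scope.
Implicit Types (x y z a b : ZG) (g h : Gn).

Lemma addspan0 (P : ZG -> Prop) : addspan P 0.
Proof. by exists [::]; rewrite big_nil. Qed.

Lemma addspan1 (P : ZG -> Prop) x : P x -> addspan P x.
Proof. by move=> Px; exists [:: x]; rewrite big_seq1; split=> // y; rewrite inE => /eqP ->. Qed.

Lemma addspanD (P : ZG -> Prop) x y : addspan P x -> addspan P y -> addspan P (x + y).
Proof.
move=> [s [Hs ->]] [t [Ht ->]]; exists (s ++ t); rewrite big_cat; split=> // z.
by rewrite mem_cat => /orP[/Hs|/Ht].
Qed.

Lemma addspanN (P : ZG -> Prop) x : (forall y, P y -> P (- y)) -> addspan P x -> addspan P (- x).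
Proof.
move=> PN [s [Hs ->]]; exists (map -%R s); rewrite big_map sumrN; split=> // z.
by case/mapP => y /Hs Py ->; apply: PN.
Qed.

Lemma aug_neg b : aug_ideal b -> aug_ideal (- b).
Proof. by rewrite /aug_ideal degN => ->. Qed.

Lemma aug_sub b b' : aug_ideal b -> aug_ideal b' -> aug_ideal (b - b').
Proof. by rewrite /aug_ideal degB => -> ->. Qed.

Lemma ip0 r : idealpow r (0 : ZG).
Proof. by case: r => //= r; apply: addspan0. Qed.

Lemma ipB r x y : idealpow r x -> idealpow r y -> idealpow r (x - y).
Proof.
case: r => //= r Hx Hy; apply: addspanD => //; apply: addspanN => // w [a [b [Ha [Hb ->]]]].
by exists a, (- b); rewrite zmulNr; split=> //; split=> //; apply: aug_neg.
Qed.

Lemma ipD r x y : idealpow r x -> idealpow r y -> idealpow r (x + y).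
Proof. by move=> Hx Hy; rewrite -[y]opprK; apply: ipB => //; rewrite -[- y]sub0r; apply: ipB => //; apply: ip0. Qed.

Lemma ip_sum r (T : eqType) (s : seq T) (F : T -> ZG) : (forall t, t \in s -> idealpow r (F t)) ->
  idealpow r (\sum_(t <- s) F t).
Proof.
elim: s => [|t s IH] H; first by rewrite big_nil; apply: ip0.
rewrite big_cons; apply: ipD; first by apply: H; rewrite inE eqxx.
by apply: IH => u us; apply: H; rewrite inE us orbT.
Qed.

Lemma ip_mul r a b : idealpow r a -> aug_ideal b -> idealpow r.+1 (zmul a b).
Proof. by move=> Ha Hb; apply: addspan1; exists a, b. Qed.

Lemma aug_basis_sub g h : aug_ideal (basis g - basis h).
Proof. by rewrite /aug_ideal degB !deg_basis subrr. Qed.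

Inductive zspan (P : ZG -> Prop) : ZG -> Prop :=
| zs0 : zspan P 0
| zsP x : P x -> zspan P x
| zsB x y : zspan P x -> zspan P y -> zspan P (x - y).

Lemma zsD (P : ZG -> Prop) x y : zspan P x -> zspan P y -> zspan P (x + y).
Proof. by move=> Hx Hy; rewrite -[y]opprK; apply: zsB => //; rewrite -[- y]sub0r; apply: zsB => //; apply: zs0. Qed.

Lemma zsMz (P : ZG -> Prop) x k : zspan P x -> zspan P (x *~ k).
Proof.
move=> Px.
have Pn j : zspan P (x *+ j).
  by elim: j => [|j IH]; [rewrite mulr0n; apply: zs0 | rewrite mulrS; apply: zsD].
case: k => k; first exact: Pn.
rewrite NegzE mulrNz -sub0r; apply: zsB; [apply: zs0 | rewrite -pmulrn; apply: Pn].
Qed.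

Fixpoint genf (g : Gn) (xs : nat -> Gn) (r : nat) : ZG :=
  match r with
  | 0 => basis g
  | r'.+1 => zmul (genf g xs r') (basis (xs r') - zone n m)
  end.

Lemma genf_ext g xs xs' r : (forall j, (j < r)%N -> xs j = xs' j) -> genf g xs r = genf g xs' r.
Proof.
elim: r => //= r IH H; rewrite IH ?H // => j jr; apply: H; exact: ltnW.
Qed.

Definition isgen r x := exists g xs, x = genf g xs r.

Lemma ip_span r D : idealpow r D -> zspan (isgen r) D.
Proof.
elim: r D => [|r IH] D /=.
  move=> _; elim/ZG_ind: D => [|a b|g]; [exact: zs0 | exact: zsB|].
  by apply: zsP; exists g, (fun _ => g).
move=> [s [Hs ->]]; elim: s Hs => [|t s IHs] Hs; first by rewrite big_nil; apply: zs0.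
rewrite big_cons; apply: zsD; last by apply: IHs => u us; apply: Hs; rewrite inE us orbT.
have [a [b [Ha [Hb ->]]]] := Hs t (mem_head _ _).
move/IH: Ha; elim => [|x Hx|x y _ Hx _ Hy].
- by rewrite zmul0l; apply: zs0.
- case: Hx => g [xs ->].
  suff : zspan (isgen r.+1) (zmul (genf g xs r) b - zmul (genf g xs r) (zone n m) *~ deg b).
    by move: Hb; rewrite /aug_ideal => ->; rewrite mulr0z subr0.
  elim/ZG_ind: b {Hb} => [|b1 b2 H1 H2|h].
  + by rewrite zmul0r raddf0 mulr0z subr0; apply: zs0.
  + rewrite zmulBr degB mulrzBr subrACA'; exact: zsB.
  + apply: zsP; exists g, (fun j => if j == r then h else xs j).
    rewrite deg_basis /= -(@genf_ext _ xs); last by move=> j jr; rewrite (ltn_eqF jr).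
    by rewrite eqxx zmulBr.
- by rewrite zmulBl; apply: zsB.
Qed.
End Ideal.

Section PmapIdeal.
Variables n k m : nat.
Variable f : 'I_k -> FG m.
Local Open Scope ring_scope.

Lemma Pmap_ext_zmul (x y : ZG n k) :
  Pmap (ext f) (zmul x y) = zmul (Pmap (ext f) x) (Pmap (ext f) y).
Proof. by apply: Pmap_zmul; apply: ext_mul. Qed.

Lemma Pmap_ip r (D : ZG n k) : idealpow r D -> idealpow r (Pmap (ext f) D).
Proof.
elim: r D => [|r IH] D //= [s [Hs ->]]; rewrite Pmap_sum.
elim: s Hs => [|t s IHs] Hs; first by rewrite big_nil; apply: addspan0.
rewrite big_cons; apply: addspanD; last by apply: IHs => u us; apply: Hs; rewrite inE us orbT.
have [a [b [Ha [Hb ->]]]] := Hs t (mem_head _ _).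
apply: addspan1; exists (Pmap (ext f) a), (Pmap (ext f) b); split; first exact: IH.
by split; [rewrite /aug_ideal deg_Pmap | rewrite Pmap_ext_zmul].
Qed.
End PmapIdeal.

Lemma ip_subfunctor n d : subfunctor (fun m => @idealpow n m d.+1).
Proof.
split; first by move=> m; apply: ip0.
split; first by move=> m x y; apply: ipB.
by move=> k m f D; apply: Pmap_ip.
Qed.

Section Univ.
Variables n d m : nat.
Local Open Scope ring_scope.
Local Notation N := (d.+2 * n).+1.

Definition idx (j : nat) (c : 'I_n) : 'I_N := inord (j * n + c).
Definition yU (j : nat) : Gn n N := [ffun c => gen (idx j c)].
Definition col (t : 'I_N) : 'I_d.+1 := inord ((t %/ n).-1).
Definition U : ZG n N := genf (yU 0) (fun j => yU j.+1) d.+1.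

Lemma idx_val j c : (j <= d.+1)%N -> nat_of_ord (idx j c) = (j * n + c)%N.
Proof. move=> jd; rewrite /idx inordK //; have := ltn_ord c; nia. Qed.

Lemma idx_div j (c : 'I_n) : ((j * n + c) %/ n)%N = j.
Proof.
have n0 : (0 < n)%N by have := ltn_ord c; lia.
by rewrite divnMDl // divn_small ?addn0.
Qed.

Lemma idx_mod j (c : 'I_n) : ((j * n + c) %% n)%N = c.
Proof. by rewrite modnMDl modn_small. Qed.

Lemma Pk_basis (i : 'I_d.+1) :
  Pmap (ext (kill col i)) (basis (yU i.+1)) = zone n N.
Proof.
rewrite Pmap_basis /zone; congr basis; apply/ffunP => c; rewrite !ffunE ext_gen /kill.
rewrite /col idx_val // idx_div /= inord_val eqxx //.
Qed.

Lemma Pk_genf (i : 'I_d.+1) r : (i < r)%N ->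
  Pmap (ext (kill col i)) (genf (yU 0) (fun j => yU j.+1) r) = 0.
Proof.
elim: r => // r IH; rewrite ltnS leq_eqVlt => /orP[/eqP ir|ir] /=;
  rewrite Pmap_ext_zmul PmapB Pmap_one //.
  by rewrite -ir Pk_basis subrr zmul0r.
by rewrite IH // zmul0l.
Qed.

Variables (g : Gn n m) (xs : nat -> Gn n m).
Definition X (j : nat) : Gn n m := if j is j'.+1 then xs j' else g.
Definition fU (t : 'I_N) : FG m :=
  odflt (fone m) (omap (fun c : 'I_n => X (t %/ n) c) (insub (t %% n)%N)).

Lemma fU_yU j : (j <= d.+1)%N -> [ffun c => ext fU (yU j c)] = X j.
Proof.
move=> jd; apply/ffunP => c; rewrite !ffunE ext_gen /fU idx_val // idx_div idx_mod.
by rewrite valK.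
Qed.

Lemma Pf_genf r : (r <= d.+1)%N ->
  Pmap (ext fU) (genf (yU 0) (fun j => yU j.+1) r) = genf g xs r.
Proof.
elim: r => [|r IH] rd /=; first by rewrite Pmap_basis fU_yU.
rewrite Pmap_ext_zmul PmapB Pmap_one // Pmap_basis fU_yU // IH //.
exact: ltnW.
Qed.
End Univ.

Lemma dir2 n d m (D : ZG n m) : idealpow d.+1 D -> Kdn d D.
Proof.
move=> HD S [S0 [SB SP]] Hpoly.
elim: (ip_span HD) => [|x [g [xs ->]]|x y _ Hx _ Hy]; first exact: S0.
- have HU : S _ (@U n d).
    apply: (Hpoly _ (@col n d)) => i; rewrite Pk_genf //; exact: S0.
  by have := SP _ _ (fU g xs) _ HU; rewrite /U Pf_genf.
- exact: SB.
Qed.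

Section Dir1.
Variables n d N : nat.
Variable c : 'I_N -> 'I_d.+1.
Local Open Scope ring_scope.
Local Notation ZG := (ZG n N).
Local Notation Gn := (Gn n N).
Implicit Types (x y a : ZG) (e : Gn).

Definition kr (j : nat) (x : ZG) : ZG := Pmap (ext (kill c (inord j))) x.

Fixpoint T (r : nat) (x : ZG) : ZG :=
  if r is r'.+1 then T r' x - T r' (kr r' x) else x.

Lemma krB j x y : kr j (x - y) = kr j x - kr j y.
Proof. exact: PmapB. Qed.

Lemma TB r x y : T r (x - y) = T r x - T r y.
Proof. by elim: r x y => //= r IH x y; rewrite krB !IH subrACA'. Qed.

Lemma T0 r : T r 0 = 0.
Proof. by have := TB r 0 0; rewrite !subrr. Qed.

Lemma TD r x y : T r (x + y) = T r x + T r y.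
Proof. by rewrite -{1}[y]opprK TB -[- y]sub0r TB T0 sub0r opprK. Qed.

Lemma T_sum r (A : Type) (s : seq A) (F : A -> ZG) : T r (\sum_(t <- s) F t) = \sum_(t <- s) T r (F t).
Proof.
elim: s => [|t s IH]; first by rewrite !big_nil T0.
by rewrite !big_cons TD IH.
Qed.

Lemma T_ip r x : idealpow d.+1 x -> idealpow d.+1 (T r x).
Proof.
elim: r x => // r IH x Hx.
change (idealpow d.+1 (T r x - T r (kr r x))); apply: ipB; first exact: IH.
by apply: IH; apply: Pmap_ip.
Qed.

Lemma T_diff r x : (forall i, idealpow d.+1 (Pmap (ext (kill c i)) x)) -> idealpow d.+1 (x - T r x).
Proof.
move=> H; elim: r => [|r IH]; first by rewrite subrr; apply: ip0.
change (idealpow d.+1 (x - (T r x - T r (kr r x)))).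
rewrite opprB addrCA addrC; apply: ipD => //. apply: T_ip; exact: H.
Qed.

Definition u e : ZG := basis e - zone n N.

Lemma kill_es (c0 : 'I_n) (x : letter N) (i : 'I_d.+1) :
  Pmap (ext (kill c i)) (basis (es c0 x)) = if c x.1 == i then zone n N else basis (es c0 x).
Proof.
rewrite Pmap_basis; case: ifP => Hc; rewrite /zone; congr basis; apply/ffunP => j; rewrite !ffunE;
  case: (j == c0); rewrite ?ext_one //= ext_sl /phi /kill Hc.
- by case: (x.2); rewrite ?finv1.
- case: x Hc => a [] Hc //=.
  by rewrite -[Defs.gen a]/(sl (a, false)) finv_sl.
Qed.

Definition single e := exists (c0 : 'I_n) (x : letter N), e = es c0 x.

Lemma Lg_single g e : e \in Lg g -> single e.
Proof.
case/flattenP => s /mapP [c0 _ ->] /mapP [x _ ->]; by exists c0, x.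
Qed.

Lemma single_dich e : single e -> exists ce : 'I_d.+1, forall i,
  Pmap (ext (kill c i)) (u e) = if ce == i then 0 else u e.
Proof.
case=> c0 [x ->]; exists (c x.1) => i.
rewrite /u PmapB kill_es Pmap_one //; case: ifP => //; by rewrite subrr.
Qed.

Lemma basis_foldl (a : Gn) (l : seq Gn) : foldl (@zmul n N) (basis a) (map (@basis n N) l) = basis (foldl (@gmul n N) a l).
Proof. by elim: l a => //= e l IH a; rewrite zmul_basis IH. Qed.

Fixpoint subsR (l : seq Gn) : seq (seq Gn) :=
  if l is e :: l' then subsR l' ++ [seq rcons s e | s <- subsR l'] else [:: [::]].

Definition mono (v : seq ZG) := foldl (@zmul n N) (zone n N) v.

Lemma expand l : foldl (@zmul n N) (zone n N) (map (@basis n N) (rev l)) =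
  \sum_(s <- subsR l) mono (map u s).
Proof.
elim: l => [|e l IH]; first by rewrite big_seq1.
rewrite rev_cons map_rcons foldl_rcons IH /=.
have -> : basis e = zone n N + u e by rewrite /u addrC subrK.
rewrite zmulDr zmulr1 zmul_suml big_cat big_map /=; congr (_ + _).
by apply: eq_bigr => s _; rewrite /mono map_rcons foldl_rcons.
Qed.

Lemma subsR_mem l s : s \in subsR l -> {subset s <= l}.
Proof.
elim: l s => [|e l IH] s /=; first by rewrite inE => /eqP -> .
rewrite mem_cat => /orP[/IH H x /H xl|/mapP [s' /IH H ->] x]; first by rewrite inE xl orbT.
by rewrite mem_rcons inE => /orP[/eqP->|/H xl]; rewrite inE ?eqxx ?xl ?orbT.
Qed.

Lemma Pmap_foldl (f : 'I_N -> FG N) a v :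
  Pmap (ext f) (foldl (@zmul n N) a v) = foldl (@zmul n N) (Pmap (ext f) a) (map (Pmap (ext f)) v).
Proof. by elim: v a => //= x v IH a; rewrite IH Pmap_ext_zmul. Qed.

Lemma foldl_zero0 v : foldl (@zmul n N) 0 v = 0.
Proof. by elim: v => //= x v IH; rewrite zmul0l. Qed.

Lemma foldl_zero a v : 0 \in v -> foldl (@zmul n N) a v = 0.
Proof.
elim: v a => //= x v IH a; rewrite inE => /orP[/eqP <-|/IH -> //].
by rewrite zmul0r foldl_zero0.
Qed.

Lemma foldl_ip r a v : (r <= size v)%N -> (forall x, x \in v -> aug_ideal x) ->
  idealpow r (foldl (@zmul n N) a v).
Proof.
elim/last_ind: v r => [|v x IH] r; first by rewrite leqn0 => /eqP ->.
rewrite size_rcons foldl_rcons => rs Hv; case: r rs => // r rs.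
apply: ip_mul; last by apply: Hv; rewrite mem_rcons mem_head.
by apply: IH => // y yv; apply: Hv; rewrite mem_rcons inE yv orbT.
Qed.

Definition cond r (s : seq Gn) := all (fun j => has (fun e => kr j (u e) == 0) s) (iota 0 r).

Lemma T_mono r s : (forall e, e \in s -> single e) ->
  T r (mono (map u s)) = if cond r s then mono (map u s) else 0.
Proof.
move=> Hs; elim: r => [|r IH] //.
change (T r.+1 (mono (map u s))) with (T r (mono (map u s)) - T r (kr r (mono (map u s)))).
rewrite /cond -addn1 iotaD all_cat /= andbT -/(cond r s).
rewrite add0n.
have -> : kr r (mono (map u s)) = foldl (@zmul n N) (zone n N) (map (kr r \o u) s).
  by rewrite /kr /mono Pmap_foldl Pmap_one // -map_comp.
case H: (has (fun e => kr r (u e) == 0) s).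
  rewrite foldl_zero ?T0 ?subr0 ?andbT ?IH //.
  by case/hasP: H => e es /eqP <-; apply/mapP; exists e.
rewrite andbF; have -> : map (kr r \o u) s = map u s.
  apply/eq_in_map => e es /=; have [ce Hce] := single_dich (Hs e es).
  move/hasPn: H => /(_ e es); rewrite /kr Hce; by case: ifP => //; rewrite eqxx.
by rewrite subrr.
Qed.

Lemma pigeon s : (forall e, e \in s -> single e) -> (forall e, e \in s -> u e != 0) ->
  cond d.+1 s -> (d.+1 <= size s)%N.
Proof.
move=> Hs Hu /allP Hc.
have Hj (j : 'I_d.+1) : has (fun e => kr j (u e) == 0) s.
  by apply: Hc; rewrite mem_iota /= add0n.
have Hf (j : 'I_d.+1) : (find (fun e => kr j (u e) == 0%R) s < size s)%N.
  by rewrite -has_find.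
pose F := fun j : 'I_d.+1 => Ordinal (Hf j).
have Fi : injective F.
  move=> j1 j2 [] E.
  have h1 := nth_find (gone n N) (Hj j1).
  have h2 := nth_find (gone n N) (Hj j2).
  rewrite -E in h2.
  set e := nth _ _ _ in h1 h2.
  have es : e \in s by apply: mem_nth; exact: Hf.
  have [ce Hce] := single_dich (Hs e es).
  move: h1 h2; rewrite /kr !inord_val !Hce.
  case: (ce =P j1) => [<-|_]; last by rewrite (negbTE (Hu e es)).
  by case: (ce =P j2) => [<-|_] //; rewrite (negbTE (Hu e es)).
by have := leq_card F Fi; rewrite !card_ord.
Qed.

Lemma T_basis g : idealpow d.+1 (T d.+1 (basis g)).
Proof.
rewrite -(Lg_decomp g) -basis_foldl -[Lg g]revK expand T_sum.
apply: ip_sum => s Hs.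
have Hse : forall e, e \in s -> single e.
  by move=> e /(subsR_mem Hs); rewrite mem_rev; apply: Lg_single.
rewrite T_mono //; case: ifP => Hc; last exact: ip0.
case: (boolP (all (fun e => u e != 0) s)) => [/allP Hu|].
  apply: foldl_ip; first by rewrite size_map; apply: pigeon.
  by move=> x /mapP [e _ ->]; apply: aug_basis_sub.
rewrite -has_predC => /hasP [e es /negPn /eqP ue].
rewrite /mono foldl_zero; first exact: ip0.
by apply/mapP; exists e.
Qed.

Lemma T_all x : idealpow d.+1 (T d.+1 x).
Proof.
elim/ZG_ind: x => [|a b Ha Hb|g]; first by rewrite T0; apply: ip0.
  by rewrite TB; apply: ipB.
exact: T_basis.
Qed.
End Dir1.

Lemma ip_poly n d : quot_poly_le d (fun m => @idealpow n m d.+1).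
Proof.
move=> N c D H.
rewrite -(subrK (T c d.+1 D) D); apply: ipD; first exact: T_diff.
exact: T_all.
Qed.

Theorem proposition2p7 (n d m : nat) (D : ZG n m) :
  @Kdn d n m D <-> @idealpow n m d.+1 D.
Proof.
split; last exact: dir2.
by move=> H; apply: (H (fun m => @idealpow n m d.+1)); [apply: ip_subfunctor | apply: ip_poly].
Qed.
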